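(* Let $\mathcal{F}$ be one of the crash or omission failure models $\mathit{Crash}_t$, $\mathit{ComCrash}_t$, $SO_t$, $RO_t$, $GO_t$, let $\mathcal{E}$ be an information exchange and $P$ a decision protocol, and let $p$ be an atomic proposition whose truth value at a point $(r,m)$ of $\mathcal{I}_{P,\mathcal{E},\mathcal{F}}$ depends only on the local states $r_1(m),\dots,r_n(m)$ of the agents. Then for every agent $i$, the formula $B^{\mathcal{N}}_i\,CB_{\mathcal{N}}\,p\Leftrightarrow B^{\mathcal{A}}_i\,CB_{\mathcal{A}}\,p$ is valid in $\mathcal{I}_{P,\mathcal{E},\mathcal{F}}$.
   Context: Agents $\mathrm{Agt}=\{1,\dots,n\}$; decision values $V$; actions $A_i=\{\mathtt{noop}\}\cup\{\mathtt{decide}_i(v):v\in V\}$. An information exchange $\mathcal{E}$ gives each agent $i$ a tuple $(L_i,I_i,M_i,\mu_i,\delta_i)$: local states $L_i$ of form $\langle\mathit{init}_i,\mathit{time}_i,\dots\rangle$ (for the hard crash model also a special state $\mathit{crashed}$), initial states $I_i$, messages $M_i\ni\bot$ ($\bot$ = no message), $\mu_i:L_i\times A_i\to(\mathrm{Agt}\to M_i)$, $\delta_i:L_i\times A_i\times\prod_jM_j\to L_i$ (preserving $\mathit{init}_i$, incrementing $\mathit{time}_i$). A decision protocol is $P=(P_i:L_i\to A_i)_i$. A failure model $(L^*_e,I_e,\delta_e,\mathit{Adv})$ has environment states, initial ones, update $\delta_e$, and adversaries $(\Delta^t,\Delta^r,\Delta^s)$ with $\Delta^t,\Delta^r:\mathbb{N}\times\mathrm{Agt}\times\mathrm{Agt}\times\bigcup_iM_i\to\bigcup_iM_i$,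 $\Delta^s_i:\mathbb{N}\times L_i\to L_i$. Runs $r$ of $\mathcal{I}_{P,\mathcal{E},\mathcal{F}}$: $r(0)=((s_e,\alpha),s_1,\dots,s_n)$ with $s_e\in I_e,\alpha\in\mathit{Adv},s_i\in I_i$; from $r(k)=((s_e,\alpha),s_1,\dots,s_n)$, $r(k+1)=((\delta_e(s_e,(a_1,\dots,a_n)),\alpha),s'_1,\dots,s'_n)$ with $a_i=P_i(s_i)$, $m_{i,j}=\mu_i(s_i,a_i)(j)$, $m'_{i,j}=\Delta^r(k,i,j,\Delta^t(k,i,j,m_{i,j}))$, $s^*_j=\delta_j(s_j,a_j,(m'_{1,j},\dots,m'_{n,j}))$, $s'_j=\Delta^s_j(k,s^*_j)$. An agent has a fault in a round if its sent messages are altered by $\Delta^t$, its received messages altered by $\Delta^r$, or its updated state altered by $\Delta^s$. $\mathcal{N}(r,m)$ = agents with no fault in any round of $r$; $\mathcal{A}(r,m)$ = agents with no fault in rounds $1..m$. Failure models (a component is ''correct'' for an agent if it acts as the identity on that agent's state / sent messages / received messages): $\mathit{Crash}_t$: at most $t$ agents crash; $\Delta^r$ correct; an agent crashing in round $k+1$ has $\Delta^s_i(k',\cdot)\equiv\mathit{crashed}$ for $k'\ge k$, sends in round $k+1$ only to agents outside some $J\subseteq\mathrm{Agt}$ (messages to $J$ become $\bot$), and sends only $\bot$ afterwards; non-crashing agents correct. $\mathit{ComCrash}_t$: same but $\Delta^s$ correct for all and no crashed state. $SO_t$: $\Delta^s,\Delta^r$ correct; at most $t$ agents may have messages they send replaced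 by $\bot$. $RO_t$: $\Delta^s,\Delta^t$ correct; at most $t$ agents may have messages they receive replaced by $\bot$. $GO_t$: $\Delta^s$ correct; at most $t$ agents may have sending and/or receiving omissions. $(r,m)\sim_i(r',m')$ iff $r_i(m)=r'_i(m')$; $K_i\phi$ holds iff $\phi$ holds at all $\sim_i$-related points. For an indexical set $S$: $B^S_i\phi:=K_i(i\in S\Rightarrow\phi)$, $E^B_S\phi:=\bigwedge_{i\in S}B^S_i\phi$, $CB_S\phi:=\bigwedge_{k\ge1}(E^B_S)^k\phi$. *)

(* Defs.v *)
From mathcomp Require Import all_boot.

(* Actions A_i = {noop} ∪ {decide_i(v) : v ∈ V} (agent index left implicit). *)
Inductive action (V : Type) : Type := noop | decide (v : V).
Arguments noop {V}.
Arguments decide {V} v.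

(* All agents share one message type M containing bot. *)
Record InfoExchange (n : nat) (V M : Type) := {
  lst : 'I_n -> Type;
  init_ty : 'I_n -> Type;
  init_of : forall i, lst i -> init_ty i;
  time_of : forall i, lst i -> nat;
  initial : forall i, lst i -> Prop;
  mu : forall i, lst i -> action V -> 'I_n -> M;
  delta : forall i, lst i -> action V -> ('I_n -> M) -> lst i }.

Arguments lst {n V M} _ _.
Arguments init_of {n V M} _ _ _.
Arguments time_of {n V M} _ _ _.
Arguments initial {n V M} _ _ _.
Arguments mu {n V M} _ _ _ _ _.
Arguments delta {n V M} _ _ _ _ _.

Definition wf_exchange {n V M} (E : InfoExchange n V M) : Prop :=
  (forall i (s : lst E i), initial E i s -> time_of E i s = 0) /\
  (forall i (s : lst E i) a ms,
      init_of E i (delta E i s a ms) = init_of E i s /\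
      time_of E i (delta E i s a ms) = (time_of E i s).+1).

Definition protocol {n V M} (E : InfoExchange n V M) :=
  forall i, lst E i -> action V.

(* Local states as they occur in runs: [None] is the special state [crashed]
   (reachable only in the hard crash model Crash_t). *)
Definition lstate {n V M} (E : InfoExchange n V M) (i : 'I_n) := option (lst E i).

Record adversary (n : nat) (M : Type) (LS : 'I_n -> Type) := {
  adv_t : nat -> 'I_n -> 'I_n -> M -> M;
  adv_r : nat -> 'I_n -> 'I_n -> M -> M;
  adv_s : forall i, nat -> LS i -> LS i }.
Arguments adv_t {n M LS} _ _ _ _ _.
Arguments adv_r {n M LS} _ _ _ _ _.
Arguments adv_s {n M LS} _ i _ _.

Inductive fmodel := FCrash | FComCrash | FSO | FRO | FGO.

Record gstate {n V M} (E : InfoExchange n V M) (Le : Type) := {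
  genv : Le;
  gadv : adversary n M (lstate E);
  gloc : forall i, lstate E i }.
Arguments genv {n V M E Le} _.
Arguments gadv {n V M E Le} _.
Arguments gloc {n V M E Le} _ i.

Section System.
Context {n : nat} {V M : Type} (bot : M) (E : InfoExchange n V M)
  (P : protocol E) (Le : Type) (Ie : Le -> Prop)
  (de : Le -> (forall i : 'I_n, action V) -> Le) (fm : fmodel) (t : nat).

Implicit Types (alpha : adversary n M (lstate E)) (g : gstate E Le).

Definition correct_t alpha i := forall k j x, adv_t alpha k i j x = x.
Definition correct_r alpha i := forall k j x, adv_r alpha k j i x = x.
Definition correct_s alpha i := forall k s, adv_s alpha i k s = s.

(* agent i crashes in round k+1 (hard: its state becomes [crashed]). *)
Definition crash_beh (hard : bool) alpha i :=
  exists (k : nat) (J : {set 'I_n}),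
    (forall k' s, k' < k -> adv_s alpha i k' s = s) /\
    (forall k' s, k <= k' -> adv_s alpha i k' s = if hard then None else s) /\
    (forall k' j x, k' < k -> adv_t alpha k' i j x = x) /\
    (forall j x, adv_t alpha k i j x = if j \in J then bot else x) /\
    (forall k' j x, k < k' -> adv_t alpha k' i j x = bot).

Definition adv_ok alpha : Prop :=
  match fm with
  | FCrash =>
      (forall i, correct_r alpha i) /\
      exists C : {set 'I_n}, #|C| <= t /\ forall i,
        (i \in C -> crash_beh true alpha i) /\
        (i \notin C -> correct_t alpha i /\ correct_s alpha i)
  | FComCrash =>
      (forall i, correct_r alpha i) /\
      exists C : {set 'I_n}, #|C| <= t /\ forall i,
        (i \in C -> crash_beh false alpha i) /\
        (i \notin C -> correct_t alpha i /\ correct_s alpha i)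
  | FSO =>
      (forall i, correct_s alpha i /\ correct_r alpha i) /\
      exists C : {set 'I_n}, #|C| <= t /\ forall i,
        (i \notin C -> correct_t alpha i) /\
        (forall k j x, adv_t alpha k i j x = x \/ adv_t alpha k i j x = bot)
  | FRO =>
      (forall i, correct_s alpha i /\ correct_t alpha i) /\
      exists C : {set 'I_n}, #|C| <= t /\ forall i,
        (i \notin C -> correct_r alpha i) /\
        (forall k j x, adv_r alpha k j i x = x \/ adv_r alpha k j i x = bot)
  | FGO =>
      (forall i, correct_s alpha i) /\
      exists C : {set 'I_n}, #|C| <= t /\ forall i,
        (i \notin C -> correct_t alpha i /\ correct_r alpha i) /\
        (forall k j x, adv_t alpha k i j x = x \/ adv_t alpha k i j x = bot) /\
        (forall k j x, adv_r alpha k j i x = x \/ adv_r alpha k j i x = bot)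
  end.

Definition act_of i (s : lstate E i) : action V :=
  match s with Some s => P i s | None => noop end.
Definition msg_of i (s : lstate E i) (a : action V) (j : 'I_n) : M :=
  match s with Some s => mu E i s a j | None => bot end.
Definition upd i (s : lstate E i) (a : action V) (ms : 'I_n -> M) : lstate E i :=
  match s with Some s => Some (delta E i s a ms) | None => None end.

Definition acts g i := act_of i (gloc g i).
Definition msgs g i j := msg_of i (gloc g i) (acts g i) j.
Definition sent g k i j := adv_t (gadv g) k i j (msgs g i j).
Definition recvd g k i j := adv_r (gadv g) k i j (sent g k i j).
Definition sstar g k j := upd j (gloc g j) (acts g j) (fun i => recvd g k i j).

Definition next k g : gstate E Le :=
  {| genv := de (genv g) (acts g);
     gadv := gadv g;
     gloc := fun j => adv_s (gadv g) j k (sstar g k j) |}.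

Definition run := nat -> gstate E Le.

Definition is_run (r : run) : Prop :=
  Ie (genv (r 0)) /\ adv_ok (gadv (r 0)) /\
  (forall i, exists s, gloc (r 0) i = Some s /\ initial E i s) /\
  (forall k, r k.+1 = next k (r k)).

(* agent i has a fault in round k+1 of r *)
Definition fault (r : run) (k : nat) (i : 'I_n) : Prop :=
  (exists j, sent (r k) k i j <> msgs (r k) i j) \/
  (exists j, recvd (r k) k j i <> sent (r k) k j i) \/
  adv_s (gadv (r k)) i k (sstar (r k) k i) <> sstar (r k) k i.

Definition iset := run -> nat -> 'I_n -> Prop.
Definition Nset : iset := fun r _ i => forall k, ~ fault r k i.
Definition Aset : iset := fun r m i => forall k, k < m -> ~ fault r k i.

Definition formula := run -> nat -> Prop.

Definition indist i (r : run) m (r' : run) m' := gloc (r m) i = gloc (r' m') i.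

Definition Bel (S : iset) i (phi : formula) : formula := fun r m =>
  forall r' m', is_run r' -> indist i r m r' m' -> S r' m' i -> phi r' m'.

Definition EB (S : iset) (phi : formula) : formula := fun r m =>
  forall i, S r m i -> Bel S i phi r m.

Definition CB (S : iset) (phi : formula) : formula := fun r m =>
  forall k, 1 <= k -> iter k (EB S) phi r m.

Definition local_prop (p : formula) : Prop :=
  forall r m r' m', is_run r -> is_run r' ->
    (forall i, gloc (r m) i = gloc (r' m') i) -> (p r m <-> p r' m').

Definition valid (phi : formula) : Prop := forall r m, is_run r -> phi r m.

End System.

(* Main.v *)
From Stdlib Require Import Classical ClassicalEpsilon FunctionalExtensionality.
Require Import Defs.
From mathcomp Require Import all_boot.


Section Proofs.
Context {n : nat} {V M : Type} (bot : M) (E : InfoExchange n V M)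
  (P : protocol E) (Le : Type) (Ie : Le -> Prop)
  (de : Le -> (forall i : 'I_n, action V) -> Le) (fm : fmodel) (t : nat).

Local Notation isrun := (is_run bot E P Le Ie de fm t).
Local Notation NS := (Nset bot E P Le).
Local Notation AS := (Aset bot E P Le).
Local Notation flt := (fault bot E P Le).
Local Notation nxt := (Defs.next bot E P Le de).
Local Notation msgs' := (msgs bot E P Le).
Local Notation sent' := (sent bot E P Le).
Local Notation recvd' := (recvd bot E P Le).
Local Notation sstar' := (sstar bot E P Le).

Definition inD (A : 'I_n -> Prop) j : bool :=
  if excluded_middle_informative (A j) then true else false.
Lemma inDP A j : inD A j = true <-> A j.
Proof. rewrite /inD; case: excluded_middle_informative => //. Qed.

Definition modadv (D : 'I_n -> bool) (al : adversary n M (lstate E)) :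
  adversary n M (lstate E) :=
 {| adv_t := fun k i j x => if D i then x else adv_t al k i j x;
    adv_r := fun k i j x => if D j then x else adv_r al k i j x;
    adv_s := fun i k s => if D i then s else adv_s al i k s |}.

Arguments modadv D al /.

Fixpoint mkrun (g0 : gstate E Le) (k : nat) : gstate E Le :=
  match k with 0 => g0 | k'.+1 => nxt k' (mkrun g0 k') end.

Lemma gadv_const (r : nat -> gstate E Le) :
  (forall k, r k.+1 = nxt k (r k)) -> forall k, gadv (r k) = gadv (r 0).
Proof. move=> H; elim=> [|k IH] //; by rewrite H /Defs.next /= IH. Qed.

Lemma nofault_facts r k j : ~ flt r k j ->
  (forall j', sent' (r k) k j j' = msgs' (r k) j j') /\
  (forall j', recvd' (r k) k j' j = sent' (r k) k j' j) /\
  adv_s (gadv (r k)) j k (sstar' (r k) k j) = sstar' (r k) k j.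
Proof.
move=> H; split; [|split].
- move=> j'; apply: NNPP => ne; apply: H; left; by exists j'.
- move=> j'; apply: NNPP => ne; apply: H; right; left; by exists j'.
- apply: NNPP => ne; apply: H; by right; right.
Qed.

Lemma round_eq (g g'' : gstate E Le) k (D : 'I_n -> bool) :
  gadv g'' = modadv D (gadv g) -> gloc g'' = gloc g ->
  (forall j, D j -> (forall j', sent' g k j j' = msgs' g j j') /\
     (forall j', recvd' g k j' j = sent' g k j' j) /\
     adv_s (gadv g) j k (sstar' g k j) = sstar' g k j) ->
  (forall i j, msgs' g'' i j = msgs' g i j) /\
  (forall i j, sent' g'' k i j = sent' g k i j) /\
  (forall i j, recvd' g'' k i j = recvd' g k i j) /\
  (forall j, sstar' g'' k j = sstar' g k j) /\
  (forall j, adv_s (gadv g'') j k (sstar' g'' k j) =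
             adv_s (gadv g) j k (sstar' g k j)).
Proof.
move=> Ha Hl HD.
have Hm : forall i j, msgs' g'' i j = msgs' g i j by move=> i j; rewrite /msgs /acts Hl.
have Hs : forall i j, sent' g'' k i j = sent' g k i j.
  move=> i j; rewrite /sent Ha /= Hm.
  case Di: (D i) => //; by have := (proj1 (HD i Di)) j; rewrite /sent => ->.
have Hr : forall i j, recvd' g'' k i j = recvd' g k i j.
  move=> i j; rewrite /recvd Ha /= Hs.
  case Dj: (D j) => //; by have := (proj1 (proj2 (HD j Dj))) i; rewrite /recvd => ->.
have Hst : forall j, sstar' g'' k j = sstar' g k j.
  move=> j; rewrite /sstar /acts Hl.
  by have -> : (fun i => recvd' g'' k i j) = (fun i => recvd' g k i j)
    by apply: functional_extensionality => i; apply: Hr.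
do 4 (split => //).
move=> j; rewrite Ha /= Hst; case Dj: (D j) => //.
by rewrite (proj2 (proj2 (HD j Dj))).
Qed.


Lemma modadv_ok (D : 'I_n -> bool) al :
  adv_ok bot E fm t al -> adv_ok bot E fm t (modadv D al).
Proof.
have cardC : forall C : {set 'I_n}, #|[set i in C | ~~ D i]| <= #|C|.
  move=> C; apply: subset_leq_card; apply/subsetP => x; rewrite inE => /andP[] //.
have inC : forall (C : {set 'I_n}) i, (i \in [set i in C | ~~ D i]) = (i \in C) && ~~ D i.
  by move=> C i; rewrite inE.
rewrite /adv_ok; case: fm.
- move=> [Hr [C [HC HCi]]]; split.
    move=> i k j x /=; case: (D i) => //; exact: Hr.
  exists [set i in C | ~~ D i]; split; first exact: leq_trans (cardC C) HC.
  move=> i; rewrite inC; case Di: (D i); rewrite /= ?andbT ?andbF.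
    split => // _; split; [move=> k j x /=|move=> k x /=]; by rewrite Di.
  have [H1 H2] := HCi i; split.
    by move=> /H1; rewrite /crash_beh /= Di.
  by move=> /H2 [H3 H4]; split; [move=> k j x /=|move=> k x /=]; rewrite Di; [apply: H3|apply: H4].
- move=> [Hr [C [HC HCi]]]; split.
    move=> i k j x /=; case: (D i) => //; exact: Hr.
  exists [set i in C | ~~ D i]; split; first exact: leq_trans (cardC C) HC.
  move=> i; rewrite inC; case Di: (D i); rewrite /= ?andbT ?andbF.
    split => // _; split; [move=> k j x /=|move=> k x /=]; by rewrite Di.
  have [H1 H2] := HCi i; split.
    by move=> /H1; rewrite /crash_beh /= Di.
  by move=> /H2 [H3 H4]; split; [move=> k j x /=|move=> k x /=]; rewrite Di; [apply: H3|apply: H4].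
- move=> [Hr [C [HC HCi]]]; split.
    move=> i; split; [move=> k x /=|move=> k j x /=]; case: (D i) => //; [exact: (proj1 (Hr i))|exact: (proj2 (Hr i))].
  exists [set i in C | ~~ D i]; split; first exact: leq_trans (cardC C) HC.
  move=> i; rewrite inC; have [H1 H2] := HCi i; case Di: (D i); rewrite /= ?andbT ?andbF.
    split; first by move=> _ k j x /=; rewrite Di.
    by move=> k j x /=; rewrite Di; left.
  split; first by move=> /H1 H3 k j x /=; rewrite Di; apply: H3.
  by move=> k j x /=; rewrite Di; apply: H2.
- move=> [Hr [C [HC HCi]]]; split.
    move=> i; split; [move=> k x /=|move=> k j x /=]; case: (D i) => //; [exact: (proj1 (Hr i))|exact: (proj2 (Hr i))].
  exists [set i in C | ~~ D i]; split; first exact: leq_trans (cardC C) HC.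
  move=> i; rewrite inC; have [H1 H2] := HCi i; case Di: (D i); rewrite /= ?andbT ?andbF.
    split; first by move=> _ k j x /=; rewrite Di.
    by move=> k j x /=; rewrite Di; left.
  split; first by move=> /H1 H3 k j x /=; rewrite Di; apply: H3.
  by move=> k j x /=; rewrite Di; apply: H2.
- move=> [Hr [C [HC HCi]]]; split.
    move=> i k x /=; case: (D i) => //; exact: Hr.
  exists [set i in C | ~~ D i]; split; first exact: leq_trans (cardC C) HC.
  move=> i; rewrite inC; have [H1 [H2 H3]] := HCi i; case Di: (D i); rewrite /= ?andbT ?andbF.
    split; first by move=> _; split => k j x /=; rewrite Di.
    by split => k j x /=; rewrite Di; left.
  split; first by move=> /H1 [H4 H5]; split => k j x /=; rewrite Di; [apply: H4|apply: H5].
  by split => k j x /=; rewrite Di; [apply: H2|apply: H3].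
Qed.

Lemma modify (r : nat -> gstate E Le) m : isrun r ->
  exists r'' : nat -> gstate E Le, isrun r'' /\
    (forall i, gloc (r'' m) i = gloc (r m) i) /\
    (forall j, NS r'' m j <-> AS r m j).
Proof.
move=> [HIe [Hok [Hinit Hstep]]].
pose D := inD (fun j => AS r m j).
pose al := gadv (r 0).
pose g0 := {| genv := genv (r 0); gadv := modadv D al; gloc := gloc (r 0) |}.
pose r'' := mkrun g0.
have Hstep'' : forall k, r'' k.+1 = nxt k (r'' k) by [].
have Ha := gadv_const r Hstep.
have Ha'' : forall k, gadv (r'' k) = modadv D al.
  by move=> k; rewrite (gadv_const r'' Hstep'' k).
have HD : forall k, k < m -> forall j, D j ->
  (forall j', sent' (r k) k j j' = msgs' (r k) j j') /\
  (forall j', recvd' (r k) k j' j = sent' (r k) k j' j) /\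
  adv_s (gadv (r k)) j k (sstar' (r k) k j) = sstar' (r k) k j.
  move=> k km j /inDP Dj; apply: nofault_facts; exact: Dj.
have Hgl : forall k, k <= m -> gloc (r'' k) = gloc (r k).
  elim=> [|k IH] km; first by [].
  have km' : k < m by [].
  have [_ [_ [_ [_ Hs]]]] := round_eq (r k) (r'' k) k D
     (etrans (Ha'' k) (congr1 (modadv D) (esym (Ha k)))) (IH (ltnW km')) (HD k km').
  rewrite Hstep'' Hstep /Defs.next /=.
  apply: functional_extensionality_dep => j; exact: Hs.
exists r''; split; [|split].
- split; first exact: HIe.
  split; first exact: modadv_ok.
  split; first exact: Hinit.
  exact: Hstep''.
- by move=> i; rewrite Hgl.
- move=> j; split.
  + move=> HN k km Hf; apply: (HN k).
    have [Hm [Hs [Hr [Hst Has]]]] := round_eq (r k) (r'' k) k D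
     (etrans (Ha'' k) (congr1 (modadv D) (esym (Ha k)))) (Hgl k (ltnW km)) (HD k km).
    case: Hf => [[j' Hj']|[[j' Hj']|Hj']].
    * left; exists j'; by rewrite Hs Hm.
    * right; left; exists j'; by rewrite Hr Hs.
    * right; right; by rewrite Has Hst.
  + move=> HA k; have Dj : D j = true by apply/inDP.
    rewrite /fault /recvd /sent /msgs Ha'' /= Dj.
    case=> [[j' Hj']|[[j' Hj']|Hj']] //.
Qed.

Local Notation EB' := (EB bot E P Le Ie de fm t).
Local Notation Bel' := (Bel bot E P Le Ie de fm t).

Lemma iter_NA (p : formula E Le) k : forall r m,
  iter k (EB' AS) p r m -> iter k (EB' NS) p r m.
Proof.
elim: k => [|k IH] //= r m H j HN r' m' Hr' Hind HN'.
apply: IH; apply: (H j _ r' m' Hr' Hind).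
- by move=> k' _; apply: HN.
- by move=> k' _; apply: HN'.
Qed.

Lemma transfer (p : formula E Le) : local_prop bot E P Le Ie de fm t p ->
  forall k r m r'', isrun r -> isrun r'' ->
  (forall i, gloc (r'' m) i = gloc (r m) i) ->
  (forall j, NS r'' m j <-> AS r m j) ->
  iter k (EB' NS) p r'' m -> iter k (EB' AS) p r m.
Proof.
move=> Hloc; elim=> [|k IH] r m r'' Hr Hr'' Hg HNA /=.
  by move/(Hloc r'' m r m Hr'' Hr Hg).
move=> H j HAj r2 m2 Hr2 Hind2 HA2.
have [r2'' [Hr2'' [Hg2 HNA2]]] := modify r2 m2 Hr2.
apply: (IH r2 m2 r2'' Hr2 Hr2'' Hg2 HNA2).
apply: (H j (proj2 (HNA j) HAj) r2'' m2 Hr2'').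
- by rewrite /indist Hg Hg2.
- exact: (proj2 (HNA2 j) HA2).
Qed.

End Proofs.

Theorem corollary11 (n : nat) (V M : Type) (bot : M) (E : InfoExchange n V M)
  (P : protocol E) (Le : Type) (Ie : Le -> Prop)
  (de : Le -> (forall i : 'I_n, action V) -> Le) (fm : fmodel) (t : nat)
  (p : formula E Le) :
  wf_exchange E ->
  local_prop bot E P Le Ie de fm t p ->
  forall i : 'I_n,
    valid bot E P Le Ie de fm t (fun r m =>
      Bel bot E P Le Ie de fm t (Nset bot E P Le) i
        (CB bot E P Le Ie de fm t (Nset bot E P Le) p) r m <->
      Bel bot E P Le Ie de fm t (Aset bot E P Le) i
        (CB bot E P Le Ie de fm t (Aset bot E P Le) p) r m).
Proof.
move=> _ Hloc i r m Hr; split.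
- move=> HN r1 m1 Hr1 Hind HA kk Hk.
  have [r1'' [Hr1'' [Hg HNA]]] := modify bot E P Le Ie de fm t r1 m1 Hr1.
  apply: (transfer bot E P Le Ie de fm t p Hloc kk r1 m1 r1'' Hr1 Hr1'' Hg HNA).
  apply: (HN r1'' m1 Hr1'') => //.
  + by rewrite /indist Hg.
  + exact: (proj2 (HNA i) HA).
- move=> HA r1 m1 Hr1 Hind HN kk Hk.
  have HA1 : Aset bot E P Le r1 m1 i by move=> k' _; apply: HN.
  apply: iter_NA; exact: (HA r1 m1 Hr1 Hind HA1 kk Hk).
Qed.
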